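(* Let $G=(V,E)$ be an almost tree (2). If $X,Y\subseteq V$ are such that $\mathbf v(X)$ and $\mathbf v(Y)$ are distinct and adjacent vertices of $\mathrm{CUT}(G)$, then $|\delta(X\triangle Y)|\le 3$.
   Context: For an undirected graph $G=(V,E)$ and $S\subseteq V$, $\delta(S)\subseteq E$ denotes the set of edges with exactly one endpoint in $S$, and $\mathbf v(S)\in\{0,1\}^{E}$ is its incidence vector ($v(S)_e=1$ iff $e\in\delta(S)$). The cut polytope is $\mathrm{CUT}(G)=\operatorname{conv}\{\mathbf v(S):S\subseteq V\}\subset\mathbb R^{E}$; adjacency of vertices means they are joined by a one-dimensional face. $X\triangle Y$ denotes symmetric difference. A connected graph is an almost tree ($k$) if every biconnected component (maximal subgraph that remains connected after removal of any single vertex) has at most $k$ edges not belonging to a spanning tree of that component. *)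

(* Defs.v *)
From HB Require Import structures.
From mathcomp Require Import all_boot all_order all_algebra.
From mathcomp Require Import reals.
Set Implicit Arguments. Unset Strict Implicit. Unset Printing Implicit Defensive.
Import Order.TTheory GRing.Theory Num.Theory.
Local Open Scope ring_scope.

Section CutPolytope.
Variable V : finType.
Variable adj : rel V.

Definition simple_graph : Prop := symmetric adj /\ irreflexive adj.

Definition edges : {set {set V}} :=
  [set A : {set V} | (#|A| == 2)%N &&
     [forall x in A, forall y in A, (x != y) ==> adj x y]].

Definition iedges (B : {set V}) : {set {set V}} := [set A in edges | A \subset B].

(* The graph (B, F) is connected (F is assumed to consist of edges inside B). *)
Definition connected_on (B : {set V}) (F : {set {set V}}) : bool :=
  [forall x in B, forall y in B, connect (fun u w => [set u; w] \in F) x y].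

Definition connected_graph : bool := connected_on setT edges.

Definition biconnected (B : {set V}) : bool :=
  connected_on B (iedges B) &&
  [forall v in B, connected_on (B :\ v) (iedges (B :\ v))].

Definition block (B : {set V}) : bool := maxset biconnected B.

Definition spanning_tree (B : {set V}) (T : {set {set V}}) : bool :=
  [&& T \subset iedges B, connected_on B T &
      [forall f in T, ~~ connected_on B (T :\ f)]].

Definition almost_tree (k : nat) : Prop :=
  connected_graph /\
  forall B : {set V}, block B ->
    exists T : {set {set V}}, spanning_tree B T /\ (#|iedges B :\: T| <= k)%N.

Definition cut (S : {set V}) : {set {set V}} :=
  [set A in edges | #|A :&: S| == 1%N].

Definition symdiff (X Y : {set V}) : {set V} := (X :\: Y) :|: (Y :\: X).

Variable R : realType.

(* Points of R^E are represented by functions {set V} -> R, only their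
   values on edges matter. *)
Definition cutvec (S : {set V}) : {set V} -> R :=
  fun A => if A \in cut S then 1 else 0.

Definition eq_on_E (x y : {set V} -> R) : Prop := forall A, A \in edges -> x A = y A.

Definition dotE (c x : {set V} -> R) : R := \sum_(A in edges) c A * x A.

Definition in_CUT (x : {set V} -> R) : Prop :=
  exists lam : {set V} -> R,
    (forall S, 0 <= lam S) /\ \sum_(S : {set V}) lam S = 1 /\
    eq_on_E x (fun A => \sum_(S : {set V}) lam S * cutvec S A).

Definition in_segment (X Y : {set V}) (x : {set V} -> R) : Prop :=
  exists t : R, 0 <= t <= 1 /\
    eq_on_E x (fun A => (1 - t) * cutvec X A + t * cutvec Y A).

(* v(X) and v(Y) are distinct and joined by a one-dimensional face of CUT(G):
   there is a valid inequality c.x <= d whose face is exactly the segment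
   [v(X), v(Y)]. *)
Definition cut_adjacent (X Y : {set V}) : Prop :=
  cut X != cut Y /\
  exists (c : {set V} -> R) (d : R),
    (forall x, in_CUT x -> dotE c x <= d) /\
    (forall x, (in_CUT x /\ dotE c x = d) <-> in_segment X Y x).

End CutPolytope.

(* Main.v *)
Require Import Defs.
From HB Require Import structures.
From mathcomp Require Import all_boot all_order all_algebra.
From mathcomp Require Import reals.
From mathcomp.algebra_tactics Require Import ring lra.
Import Order.TTheory GRing.Theory Num.Theory.
Set Implicit Arguments. Unset Strict Implicit. Unset Printing Implicit Defensive.

Section G.
Variable V : finType.
Variable adj : rel V.
Hypothesis adjS : symmetric adj.
Hypothesis adjI : irreflexive adj.
Local Notation E := (edges adj).

Definition er (F : {set {set V}}) : rel V := fun u w => [set u; w] \in F.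

Lemma er_sym F : symmetric (er F).
Proof. by move=> u w; rewrite /er setUC. Qed.

Lemma er_csym F x y : connect (er F) x y = connect (er F) y x.
Proof. exact: (sym_connect_sym (@er_sym F)). Qed.

Lemma adj_neq x y : adj x y -> x != y.
Proof. by apply: contraTneq => ->; rewrite adjI. Qed.

Lemma edge2 x y : adj x y -> [set x; y] \in E.
Proof.
move=> xy; rewrite inE cards2 adj_neq //=.
apply/forall_inP => a; rewrite !inE => /orP[]/eqP->; apply/forall_inP => b;
  rewrite !inE => /orP[]/eqP->; rewrite ?eqxx //=; apply/implyP => _; by rewrite // adjS.
Qed.

Lemma edgeP A : A \in E -> exists x y, adj x y /\ A = [set x; y].
Proof.
rewrite inE => /andP[/cards2P [x [y [xy ->]]] /forall_inP H].
exists x, y; split=> //.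
by have:= H x (set21 x y) => /forall_inP/(_ y (set22 x y)); rewrite xy.
Qed.

Lemma card2I x y (U : {set V}) : x != y -> #|[set x; y] :&: U| = (x \in U) + (y \in U).
Proof.
move=> xy; rewrite -sum1_card.
rewrite (eq_bigl (fun z => (z \in [set x; y]) && (z \in U))); last by move=> z; rewrite inE.
rewrite big_mkcondr /= big_setU1 /=; last by rewrite inE.
by rewrite big_set1; case: (x \in U); case: (y \in U).
Qed.

Lemma cut_xor x y U : adj x y -> ([set x; y] \in cut adj U) = (x \in U) (+) (y \in U).
Proof.
move=> xy; rewrite inE edge2 // card2I ?adj_neq //.
by case: (x \in U); case: (y \in U).
Qed.

Lemma ie_xy x y B : adj x y -> ([set x; y] \in iedges adj B) = (x \in B) && (y \in B).
Proof. by move=> xy; rewrite inE edge2 // subUset !sub1set. Qed.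


Lemma sd_in (X Y : {set V}) u : (u \in symdiff X Y) = (u \in X) (+) (u \in Y).
Proof. by rewrite /symdiff !inE; case: (u \in X); case: (u \in Y). Qed.

Lemma cutE A U : A \in cut adj U -> A \in E.
Proof. by rewrite inE => /andP[]. Qed.

Lemma cut_nE A U : A \notin E -> A \notin cut adj U.
Proof. by apply: contra; apply: cutE. Qed.

Lemma cut_sd A (X T : {set V}) : A \in E ->
  (A \in cut adj (symdiff X T)) = (A \in cut adj X) (+) (A \in cut adj T).
Proof.
move=> /edgeP [x [y [xy ->]]]; rewrite !cut_xor // !sd_in.
by case: (x \in X); case: (y \in X); case: (x \in T); case: (y \in T).
Qed.

Lemma cutC U : cut adj (~: U) = cut adj U.
Proof.
apply/setP => A; case: (boolP (A \in E)) => [/edgeP [x [y [xy ->]]]|nA].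
  by rewrite !cut_xor // !inE; case: (x \in U); case: (y \in U).
by rewrite (negbTE (cut_nE _ nA)) (negbTE (cut_nE _ nA)).
Qed.

Lemma erE u w : [set u; w] \in E -> adj u w.
Proof.
rewrite inE => /andP[c2 /forall_inP H]; rewrite cards2 in c2.
have uw : u != w by move: c2; case: (u != w).
by have:= H u (set21 u w) => /forall_inP/(_ w (set22 u w)); rewrite uw.
Qed.

Lemma ie_sub (F : {set {set V}}) (B : {set V}) (u w : V) : F \subset iedges adj B -> [set u; w] \in F -> (u \in B) && (w \in B).
Proof.
move=> sF /(subsetP sF); rewrite inE => /andP[/erE uw]; by rewrite subUset !sub1set.
Qed.

Definition bondP (S : {set V}) := cut adj S != set0 /\
  forall T A1 A2, cut adj T \subset cut adj S -> A1 \in cut adj T ->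
  A2 \in cut adj S -> A2 \notin cut adj T -> False.

Lemma Ksub (S : {set V}) (x : V) : x \in S -> [set z | connect (er (iedges adj S)) x z] \subset S.
Proof.
move=> xS; apply/subsetP => z; rewrite inE => cz.
have cl : closed (er (iedges adj S)) (mem S).
  move=> u w ruw; have /andP[-> ->] := ie_sub (subxx _) ruw; by [].
by rewrite -(closed_connect cl cz).
Qed.

Lemma cutK (S : {set V}) (x : V) : x \in S -> cut adj [set z | connect (er (iedges adj S)) x z] \subset cut adj S.
Proof.
move=> xS; apply/subsetP => A HA; have := cutE HA; move=> /edgeP [u [w [uw eA]]].
move: HA; rewrite eA !cut_xor //.
set K := [set z | _].
have KS := subsetP (Ksub xS).
have side p q : adj p q -> p \in K -> q \notin K -> (p \in S) && (q \notin S).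
  move=> pq pK qK; have pS := KS _ pK; rewrite pS /=; apply: contra qK => qS.
  move: pK; rewrite !inE => cp; apply: connect_trans cp (connect1 _).
  by rewrite /er ie_xy // pS qS.
case pK: (u \in K); case qK: (w \in K) => //= _.
  by have /andP[-> /negbTE ->] := side u w uw pK (negbT qK).
by have /andP[-> /negbTE ->] := side w u (ltac:(by rewrite adjS)) qK (negbT pK).
Qed.

Lemma cross (K : {set V}) x z : x \in K -> z \notin K -> connect (er E) x z ->
  exists A, A \in cut adj K.
Proof.
move=> xK zK cxz; apply/existsP; apply: contraNT zK => /existsPn nA.
have cl : closed (er E) (mem K).
  move=> u w ruw; have uw := erE ruw; have := nA [set u; w].
  by rewrite cut_xor //; case: (u \in K); case: (w \in K).
by rewrite -(closed_connect cl cxz).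
Qed.

Lemma out_vertex (S : {set V}) : cut adj S != set0 -> exists z, z \notin S.
Proof.
case/set0Pn => A HA; have /edgeP [u [w [uw eA]]] := cutE HA.
move: HA; rewrite eA cut_xor //.
by case uS: (u \in S); case wS: (w \in S) => //= _; [exists w | exists u]; rewrite ?uS ?wS.
Qed.

Lemma inside_conn (S : {set V}) : connected_graph adj -> bondP S ->
  forall a b, a \in S -> b \in S -> connect (er (iedges adj S)) a b.
Proof.
move=> cg [ne bd] a b aS bS; apply/negPn/negP => nc.
pose K := [set z | connect (er (iedges adj S)) a z].
pose K' := [set z | connect (er (iedges adj S)) b z].
have [z zS] := out_vertex ne.
have cgP u w : connect (er E) u w.
  by move/forall_inP: cg => /(_ u (in_setT u))/forall_inP/(_ w (in_setT w)).
have KS := subsetP (Ksub aS); have K'S := subsetP (Ksub bS).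
have [A1 H1] : exists A, A \in cut adj K.
  apply: (@cross K a z); first by rewrite inE connect0.
    by apply: contra zS => /KS.
  exact: cgP.
have [A2 H2] : exists A, A \in cut adj K'.
  apply: (@cross K' b z); first by rewrite inE connect0.
    by apply: contra zS => /K'S.
  exact: cgP.
have H2S := subsetP (cutK bS) _ H2.
apply: (bd K A1 A2 (cutK aS) H1 H2S).
apply/negP => H2K.
have /edgeP [u [w [uw eA]]] := cutE H2.
move: H2 H2S H2K; rewrite eA !cut_xor //.
have cK p : p \in K -> p \in K' -> False.
  rewrite !inE => c1 c2; move/negP: nc; apply; apply: (connect_trans c1).
  by rewrite er_csym.
have := KS u; have := KS w; have := K'S u; have := K'S w; have := cK u; have := cK w.
by case: (u \in K); case: (w \in K); case: (u \in K'); case: (w \in K');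
  case: (u \in S); case: (w \in S) => //= h1 h2 h3 h4 h5 h6; 
  try (by case: h1); try (by case: h2); try (by have := h3 isT); try (by have := h4 isT);
  try (by have := h5 isT); try (by have := h6 isT).
Qed.

Lemma odd_card (T : finType) (A B : {set T}) :
  odd #|A :&: B| = \big[addb/false]_(x in B) (x \in A).
Proof.
rewrite -sum1_card (eq_bigl (fun x => (x \in B) && (x \in A))); last first.
  by move=> x; rewrite inE andbC.
rewrite big_mkcondr (big_morph odd oddD (erefl : odd 0 = false)); apply: eq_bigr => x _.
by case: (x \in A).
Qed.

Definition orth (D : {set {set V}}) := forall U : {set V}, ~~ odd #|D :&: cut adj U|.

Lemma iedgesE (B : {set V}) : iedges adj B \subset E.
Proof. by apply/subsetP => A; rewrite inE => /andP[]. Qed.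

Lemma tree_no_orth (B : {set V}) (T D : {set {set V}}) : spanning_tree adj B T ->
  D \subset T -> D != set0 -> orth D -> False.
Proof.
case/and3P => Tsub conn mini DT /set0Pn [f fD] oD.
have fT := subsetP DT _ fD.
have TE := subset_trans Tsub (iedgesE B).
have /forall_inPn [x xB] := (forall_inP mini) f fT.
move/forall_inPn => [y yB ncxy].
pose U := [set z | connect (er (T :\ f)) x z].
have notcut A : A \in T -> A != f -> A \notin cut adj U.
  move=> AT Af; have /edgeP [u [w [uw eA]]] := subsetP TE _ AT.
  rewrite eA cut_xor // !inE.
  have ruw : er (T :\ f) u w by rewrite /er !inE -eA Af.
  have rwu : er (T :\ f) w u by rewrite er_sym.
  case cu: (connect _ x u); case cw: (connect _ x w) => //=.
    by rewrite (connect_trans cu (connect1 ruw)) in cw.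
  by rewrite (connect_trans cw (connect1 rwu)) in cu.
have fcut : f \in cut adj U.
  apply/negPn/negP => nf.
  have cl : closed (er T) (mem U).
    move=> u w ruw; have uw := erE (subsetP TE _ ruw).
    have : [set u; w] \notin cut adj U.
      case: (eqVneq [set u; w] f) => [->|ne]; first exact: nf.
      exact: notcut.
    by rewrite cut_xor //; case: (u \in U); case: (w \in U).
  have cT : connect (er T) x y.
    by move/forall_inP: conn => /(_ x xB)/forall_inP/(_ y yB).
  have := closed_connect cl cT; rewrite !inE connect0 => /esym.
  by rewrite (negbTE ncxy).
have : D :&: cut adj U = [set f].
  apply/setP => A; rewrite in_setI in_set1; case: (eqVneq A f) => [->|ne]; first by rewrite fD fcut.
  case AD: (A \in D) => //=; apply/negbTE; apply: notcut => //.
  exact: subsetP DT _ AD.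
by move=> eq; have := oD U; rewrite eq cards1.
Qed.

Fixpoint pedges (x : V) (p : seq V) : seq {set V} :=
  if p is y :: p' then [set x; y] :: pedges y p' else [::].

Lemma pedges_cat x p q : pedges x (p ++ q) = pedges x p ++ pedges (last x p) q.
Proof. by elim: p x => [|y p IH] x //=; rewrite IH. Qed.

Lemma pedges_odd U x p : path adj x p ->
  odd (count (mem (cut adj U)) (pedges x p)) = (x \in U) (+) (last x p \in U).
Proof.
elim: p x => [|y p IH] x /=; first by case: (x \in U).
case/andP => xy pp; rewrite oddD IH // cut_xor //.
by case: (x \in U); case: (y \in U); case: (last y p \in U).
Qed.

Lemma sum_count (C : {set {set V}}) (s : seq {set V}) :
  \sum_(A in C) count_mem A s = count (mem C) s.
Proof.
elim: s => [|a s IH] /=; first by rewrite big1.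
rewrite big_split /= IH; congr (_ + _).
case aC: (a \in C).
  rewrite (bigD1 a) //= eqxx big1 // => A /andP[_ ne].
  by rewrite eq_sym (negbTE ne).
by rewrite big1 // => A HAC; case: (eqVneq a A) => // eaA; rewrite eaA HAC in aC.
Qed.

Definition wset x p : {set {set V}} := [set A | odd (count_mem A (pedges x p))].

Lemma wset_orth x p : path adj x p -> last x p = x -> orth (wset x p).
Proof.
move=> pp lp U; rewrite odd_card.
rewrite (eq_bigr (fun A => odd (count_mem A (pedges x p)))); last by move=> A _; rewrite inE.
rewrite -(big_morph odd oddD (erefl : odd 0 = false)) sum_count pedges_odd // lp.
by rewrite addbb.
Qed.

Lemma pedges_sub (W : {set V}) x p : path adj x p -> x \in W -> {subset p <= W} ->
  {subset pedges x p <= iedges adj W}.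
Proof.
elim: p x => [|y p IH] x //= /andP[xy pp] xW pW A.
rewrite inE => /orP[/eqP ->|]; first by rewrite ie_xy // xW pW // mem_head.
apply: IH => //; first by rewrite pW // mem_head.
by move=> z zp; rewrite pW // inE zp orbT.
Qed.

Lemma wset_sub (W : {set V}) x p : path adj x p -> x \in W -> {subset p <= W} ->
  wset x p \subset iedges adj W.
Proof.
move=> pp xW pW; apply/subsetP => A; rewrite inE => oA.
apply: (pedges_sub pp xW pW); rewrite -has_pred1 has_count lt0n.
by apply: contraTneq oA => ->.
Qed.

Lemma hub (W : {set V}) (F : {set {set V}}) h :
  (forall y, y \in W -> connect (er F) h y) -> connected_on W F.
Proof.
move=> H; apply/forall_inP => a aW; apply/forall_inP => b bW.
apply: (@connect_trans _ _ h); last exact: H.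
by rewrite er_csym; apply: H.
Qed.

Lemma path_conn (W : {set V}) h p : path adj h p -> {subset h :: p <= W} ->
  forall y, y \in h :: p -> connect (er (iedges adj W)) h y.
Proof.
elim: p h => [|z p IH] h hp sub y.
  by rewrite mem_seq1 => /eqP ->; apply: connect0.
rewrite in_cons => /orP[/eqP->|yzp]; first exact: connect0.
case/andP: hp => hz pz.
apply: (@connect_trans _ _ z).
  by apply: connect1; rewrite /er ie_xy // !sub // !inE eqxx ?orbT.
apply: (IH z pz _ y yzp) => u uzp; apply: sub; by rewrite inE uzp orbT.
Qed.

Lemma seq_conn h p : path adj h p ->
  connected_on [set y in h :: p] (iedges adj [set y in h :: p]).
Proof.
move=> hp; apply: (@hub _ _ h) => y; rewrite inE => yin.
by apply: (@path_conn _ h p hp) => // z zin; rewrite inE.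
Qed.

Lemma conn0 (F : {set {set V}}) : connected_on set0 F.
Proof. by apply/forall_inP => a; rewrite inE. Qed.

Lemma set_nil : [set y in [::]] = set0 :> {set V}.
Proof. by apply/setP => z; rewrite !inE. Qed.

Lemma cycle_bic x w : path adj x w -> last x w = x -> uniq w -> biconnected adj [set y in w].
Proof.
move=> pw lw uw; apply/andP; split.
  case: w pw lw uw => [|y w'] pw lw uw; first by rewrite set_nil; apply: conn0.
  by move: pw => /= /andP[_ pw]; apply: seq_conn.
apply/forall_inP => v; rewrite inE => vw.
case/splitPr: vw pw lw uw => w1 w2 pw lw uw.
have eqset : [set y in w1 ++ v :: w2] :\ v = [set y in w2 ++ w1].
  move: uw; rewrite cat_uniq /= => /and4P[_ /norP[vw1 _] vw2 _].
  apply/setP => z; rewrite !inE !mem_cat inE.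
  case: (eqVneq z v) => [->|]; first by rewrite (negbTE vw1) (negbTE vw2).
  by rewrite orbC.
rewrite eqset.
case: w2 pw lw uw eqset => [|z w2] pw lw uw _.
  rewrite cat0s; move: pw; rewrite cat_path => /andP[pw1 _].
  case: w1 pw1 {lw uw} => [|y w1] pw1; first by rewrite set_nil; apply: conn0.
  by move: pw1 => /= /andP[_ pw1]; apply: seq_conn.
move: pw; rewrite cat_path => /andP[pw1 /= /andP[_ /andP[_ pw2]]].
move: lw; rewrite last_cat /= => lw.
have : path adj z (w2 ++ w1) by rewrite cat_path pw2 lw.
by move=> p; apply: (seq_conn p).
Qed.

Lemma ie_mono (W W' : {set V}) : W \subset W' -> iedges adj W \subset iedges adj W'.
Proof.
move=> sW; apply/subsetP => A; rewrite !inE => /andP[-> sA] /=.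
exact: subset_trans sA sW.
Qed.

Lemma conn_mono (W W' : {set V}) u w : W \subset W' ->
  connect (er (iedges adj W)) u w -> connect (er (iedges adj W')) u w.
Proof.
move=> sW; apply: connect_sub => a b rab; apply: connect1.
exact: subsetP (ie_mono sW) _ rab.
Qed.

Lemma bic_any (B : {set V}) v : biconnected adj B ->
  connected_on (B :\ v) (iedges adj (B :\ v)).
Proof.
case/andP => cB /forall_inP H; case vB: (v \in B); first exact: H.
have -> : B :\ v = B; last exact: cB.
by apply/setP => z; rewrite !inE; case: eqVneq => // ->; rewrite vB.
Qed.

Lemma conn_union (A B : {set V}) h :
  connected_on A (iedges adj A) -> connected_on B (iedges adj B) ->
  h \in A -> h \in B -> connected_on (A :|: B) (iedges adj (A :|: B)).
Proof.
move=> cA cB hA hB; apply: (@hub _ _ h) => y; rewrite inE => /orP[yA|yB].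
  apply: (@conn_mono A); first exact: subsetUl.
  by move/forall_inP: cA => /(_ h hA)/forall_inP/(_ y yA).
apply: (@conn_mono B); first exact: subsetUr.
by move/forall_inP: cB => /(_ h hB)/forall_inP/(_ y yB).
Qed.

Lemma bic_union (A B : {set V}) x y : biconnected adj A -> biconnected adj B ->
  x != y -> x \in A -> y \in A -> x \in B -> y \in B -> biconnected adj (A :|: B).
Proof.
move=> bA bB xy xA yA xB yB; apply/andP; split.
  by apply: (conn_union (h:=x)) => //; [case/andP: bA | case/andP: bB].
apply/forall_inP => v _; rewrite setDUl.
pose h := if v == x then y else x.
have hv : h != v.
  by rewrite /h; case: (eqVneq v x) => [->|vx]; rewrite eq_sym.
apply: (conn_union (h:=h)); try exact: bic_any.
  by rewrite !inE hv /h; case: (v == x).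
by rewrite !inE hv /h; case: (v == x).
Qed.

Lemma path_er (S : {set V}) x p : path (er (iedges adj S)) x p -> x \in S ->
  path adj x p && all (mem S) p.
Proof.
elim: p x => [|y p IH] x //= /andP[xy pp] xS.
have /andP[_ yS] := ie_sub (subxx _) xy.
have := IH y pp yS => /andP[-> ->]; rewrite yS !andbT.
exact: erE (subsetP (iedgesE S) _ xy).
Qed.

Lemma ie_notcut (S : {set V}) A : A \in iedges adj S -> A \notin cut adj S.
Proof.
move=> HA; have /edgeP [u [w [uw eA]]] := subsetP (iedgesE S) _ HA.
move: HA; rewrite eA ie_xy // cut_xor // => /andP[-> ->] //.
Qed.

Lemma cycle_data (S : {set V}) s1 t1 si ti :
  (forall a b, a \in S -> b \in S -> connect (er (iedges adj S)) a b) ->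
  (forall a b, a \in ~: S -> b \in ~: S -> connect (er (iedges adj (~: S))) a b) ->
  s1 \in S -> t1 \notin S -> adj s1 t1 -> si \in S -> ti \notin S -> adj si ti ->
  exists W D, (biconnected adj W /\ s1 \in W /\ t1 \in W) /\ (orth D /\ D \subset iedges adj W /\
     forall e, e \in cut adj S -> (e \in D) = (e == [set s1; t1]) (+) (e == [set si; ti])).
Proof.
move=> cS cC s1S t1S st1 siS tiS sti.
have /connectP [p0 pp0 lp0] := cS s1 si s1S siS.
move: lp0; case: (shortenP pp0) => p pp up _ lp.
have tiC : ti \in ~: S by rewrite inE.
have t1C : t1 \in ~: S by rewrite inE.
have /connectP [q0 qq0 lq0] := cC ti t1 tiC t1C.
move: lq0; case: (shortenP qq0) => q qq uq _ lq.
have /andP[pa /allP pS] := path_er pp s1S.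
have /andP[qa /allP qS] := path_er qq tiC.
pose w := rcons (p ++ ti :: q) s1.
have pw : path adj s1 w.
  rewrite rcons_path cat_path pa -lp /= sti qa /= last_cat /= -lq adjS.
  by [].
have lw : last s1 w = s1 by rewrite last_rcons.
have qC z : z \in ti :: q -> z \notin S.
  rewrite in_cons => /orP[/eqP->|zq]; first exact: tiS.
  by have := qS z zq; rewrite -in_setC.
have uw : uniq w.
  rewrite rcons_uniq mem_cat negb_or cat_uniq uq.
  move: up => /= /andP[-> ->] /=; rewrite andbT.
  apply/andP; split; first by apply/negP => /qC; rewrite s1S.
  have : ~~ has (mem p) (ti :: q).
    apply/hasPn => z /qC zS; apply/negP => zp; move: zS.
    by have -> : z \in S := pS z zp.
  by [].
exists [set y in w], (wset s1 w); split; split; [| split | | split].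
- exact: (cycle_bic pw lw uw).
- by rewrite inE /w mem_rcons mem_head.
- rewrite inE /w mem_rcons in_cons mem_cat; apply/orP; right; apply/orP; right.
  by rewrite lq mem_last.
- exact: wset_orth.
- by apply: wset_sub => //; [rewrite inE /w mem_rcons mem_head | move=> z; rewrite inE].
move=> e eS; rewrite inE /w rcons_cat pedges_cat -cats1 pedges_cat /= -lp -lq /=.
have n1 : count_mem e (pedges s1 p) = 0.
  apply/count_memPn; apply/negP => /(pedges_sub pa s1S pS) => /ie_notcut.
  by rewrite eS.
have n2 : count_mem e (pedges ti q) = 0.
  apply/count_memPn; apply/negP => /(pedges_sub qa tiC qS) => /ie_notcut.
  by rewrite cutC eS.
rewrite count_cat n1 /= count_cat n2 /= addn0 add0n [[set t1; s1]]setUC.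
rewrite oddD !oddb (eq_sym _ e) (eq_sym _ e) addbC.
by [].
Qed.

Lemma cut_ends (S : {set V}) e : e \in cut adj S ->
  exists s t, [/\ s \in S, t \notin S, adj s t & e = [set s; t]].
Proof.
move=> eS; have /edgeP [u [w [uw eA]]] := cutE eS.
move: eS; rewrite eA cut_xor //.
case uS: (u \in S); case wS: (w \in S) => //= _.
  by exists u, w; rewrite uS wS.
by exists w, u; rewrite uS wS adjS setUC.
Qed.

Lemma pick4 (T : finType) (C : {set T}) : 3 < #|C| ->
  exists a b c d, [/\ a \in C, b \in C, c \in C & d \in C] /\
    [/\ a != b, a != c, a != d, b != c & (b != d) && (c != d)].
Proof.
move=> h.
have [a aC] : exists a, a \in C by apply/set0Pn; rewrite -card_gt0; apply: leq_ltn_trans h.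
have h1 : 2 < #|C :\ a| by move: h; rewrite (cardsD1 a C) aC.
have [b bC] : exists b, b \in C :\ a by apply/set0Pn; rewrite -card_gt0; apply: leq_ltn_trans h1.
have h2 : 1 < #|C :\ a :\ b| by move: h1; rewrite (cardsD1 b (C :\ a)) bC.
have [c cC] : exists c, c \in C :\ a :\ b by apply/set0Pn; rewrite -card_gt0; apply: leq_ltn_trans h2.
have h3 : 0 < #|C :\ a :\ b :\ c| by move: h2; rewrite (cardsD1 c (C :\ a :\ b)) cC.
have [d dC] : exists d, d \in C :\ a :\ b :\ c by apply/set0Pn; rewrite -card_gt0.
move: bC cC dC; rewrite !inE => /andP[ba bC] /and3P[cb ca cC] /and4P[dc db da dC].
exists a, b, c, d; split; first by split.
rewrite (eq_sym b d) (eq_sym c d) db dc.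
by split; rewrite // eq_sym.
Qed.

Definition opt (bb : bool) (D : {set {set V}}) := if bb then D else set0.
Definition sdS (D D' : {set {set V}}) := [set A | (A \in D) (+) (A \in D')].

Lemma orth_opt bb (D : {set {set V}}) : orth D -> orth (opt bb D).
Proof. by case: bb => // _ U; rewrite /opt set0I cards0. Qed.

Lemma orth_sdS (D D' : {set {set V}}) : orth D -> orth D' -> orth (sdS D D').
Proof.
move=> o o' U; rewrite odd_card.
rewrite (eq_bigr (fun A => (A \in D) (+) (A \in D'))); last by move=> A _; rewrite inE.
rewrite big_split /= -!odd_card.
by move: (o U) (o' U); case: (odd _); case: (odd _).
Qed.

Lemma opt_sub bb (D X : {set {set V}}) : D \subset X -> opt bb D \subset X.
Proof. by case: bb => //= _; apply: sub0set. Qed.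

Lemma sdS_sub (D D' X : {set {set V}}) : D \subset X -> D' \subset X -> sdS D D' \subset X.
Proof.
move=> s1 s2; apply/subsetP => A; rewrite inE.
case A1: (A \in D); case A2: (A \in D') => //= _; [exact: (subsetP s1 _ A1) | exact: (subsetP s2 _ A2)].
Qed.

Lemma main_graph (S : {set V}) : connected_graph adj -> almost_tree adj 2 -> bondP S ->
  #|cut adj S| <= 3.
Proof.
move=> cg hat bd; rewrite leqNgt; apply/negP => big.
have cS := inside_conn cg bd.
have bdC : bondP (~: S) by rewrite /bondP cutC.
have cC := inside_conn cg bdC.
have [e1 [e2 [e3 [e4 [[H1 H2 H3 H4] [n12 n13 n14 n23 /andP[n24 n34]]]]]]] := pick4 big.
have [s1 [t1 [s1S t1S st1 ee1]]] := cut_ends H1.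
have [s2 [t2 [s2S t2S st2 ee2]]] := cut_ends H2.
have [s3 [t3 [s3S t3S st3 ee3]]] := cut_ends H3.
have [s4 [t4 [s4S t4S st4 ee4]]] := cut_ends H4.
have [W2 [D2 [[bW2 [s1W2 t1W2]] [o2 [sD2 k2]]]]] := cycle_data cS cC s1S t1S st1 s2S t2S st2.
have [W3 [D3 [[bW3 [s1W3 t1W3]] [o3 [sD3 k3]]]]] := cycle_data cS cC s1S t1S st1 s3S t3S st3.
have [W4 [D4 [[bW4 [s1W4 t1W4]] [o4 [sD4 k4]]]]] := cycle_data cS cC s1S t1S st1 s4S t4S st4.
rewrite -ee1 in k2 k3 k4; rewrite -ee2 in k2; rewrite -ee3 in k3; rewrite -ee4 in k4.
have st := adj_neq st1.
have bW : biconnected adj (W2 :|: W3 :|: W4).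
  apply: (bic_union (x:=s1) (y:=t1)) => //; rewrite ?inE ?s1W2 ?t1W2 ?s1W4 ?t1W4 //.
  exact: (bic_union (x:=s1) (y:=t1)).
have [B blk sWB] := maxset_exists bW.
have [T [spT cardN]] := hat.2 B blk.
have ssub (W : {set V}) (D : {set {set V}}) : D \subset iedges adj W -> W \subset B -> D \subset iedges adj B.
  by move=> h1 h2; apply: subset_trans h1 (ie_mono h2).
have W2B : W2 \subset B by apply: subset_trans _ sWB; rewrite -setUA subsetUl.
have W3B : W3 \subset B.
  apply: subset_trans _ sWB; rewrite -setUA; apply: subset_trans _ (subsetUr _ _).
  exact: subsetUl.
have W4B : W4 \subset B by apply: subset_trans _ sWB; apply: subsetUr.
pose N := iedges adj B :\: T.
pose DJ (b : bool * bool * bool) := sdS (sdS (opt b.1.1 D2) (opt b.1.2 D3)) (opt b.2 D4).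
have oDJ b : orth (DJ b) by apply: orth_sdS; [apply: orth_sdS|]; apply: orth_opt.
have sDJ b : DJ b \subset iedges adj B.
  by apply: sdS_sub; [apply: sdS_sub|]; apply: opt_sub; apply: ssub; eassumption.
have inDJ b e : (e \in DJ b) = (b.1.1 && (e \in D2)) (+) (b.1.2 && (e \in D3)) (+) (b.2 && (e \in D4)).
  by rewrite /DJ /sdS /opt !inE; case: b.1.1; case: b.1.2; case: b.2; rewrite ?inE.
have n21 : e2 != e1 by rewrite eq_sym.
have n31 : e3 != e1 by rewrite eq_sym.
have n41 : e4 != e1 by rewrite eq_sym.
have n32 : e3 != e2 by rewrite eq_sym.
have n42 : e4 != e2 by rewrite eq_sym.
have n43 : e4 != e3 by rewrite eq_sym.
have e2D b : (e2 \in DJ b) = b.1.1.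
  rewrite inDJ k2 ?k3 ?k4 // !eqxx (negbTE n21) (negbTE n23) (negbTE n24).
  by case: b.1.1; case: b.1.2; case: b.2.
have e3D b : (e3 \in DJ b) = b.1.2.
  rewrite inDJ k2 ?k3 ?k4 // !eqxx (negbTE n31) (negbTE n32) (negbTE n34).
  by case: b.1.1; case: b.1.2; case: b.2.
have e4D b : (e4 \in DJ b) = b.2.
  rewrite inDJ k2 ?k3 ?k4 // !eqxx (negbTE n41) (negbTE n42) (negbTE n43).
  by case: b.1.1; case: b.1.2; case: b.2.
pose g b := DJ b :&: N.
case inj: [forall b, forall b', (g b == g b') ==> (b == b')].
  have ginj : {in [set: bool * bool * bool] &, injective g}.
    move=> b b' _ _ gb; move/forallP: inj => /(_ b)/forallP/(_ b')/implyP.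
    by rewrite gb eqxx => /(_ isT)/eqP.
  have := card_in_imset ginj; rewrite cardsT !card_prod card_bool => c8.
  have : #|g @: [set: bool * bool * bool]| <= #|powerset N|.
    apply: subset_leq_card; apply/subsetP => A /imsetP [b _ ->].
    by rewrite powersetE subsetIr.
  rewrite c8 card_powerset => h.
  have := leq_trans h (leq_pexp2l (isT : 0 < 2) cardN).
  by [].
move/negbT: inj => /forallPn [b] /forallPn [b'] /negP ng.
have gb : g b = g b' by apply/eqP; apply/negPn/negP => ne; apply: ng; apply/implyP => h; rewrite h in ne.
have nb : b != b' by apply/negP => h; apply: ng; apply/implyP => _.
apply: (@tree_no_orth B T (sdS (DJ b) (DJ b'))) => //.
- apply/subsetP => A; rewrite inE => hA.
  have AB : A \in iedges adj B.
    by move: hA; case A1: (A \in DJ b) => /= hA; [apply: (subsetP (sDJ b)) | apply: (subsetP (sDJ b'))].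
  apply/negPn/negP => AT.
  have AN : A \in N by rewrite inE AT AB.
  have := congr1 (fun X : {set {set V}} => A \in X) gb; rewrite /= /g !in_setI AN !andbT.
  by move=> eq; rewrite eq addbb in hA.
- apply/set0Pn.
  move: nb; clear ng gb; case: b => [[x1 x2] x3]; case: b' => [[y1 y2] y3] nb.
  case: (eqVneq x1 y1) => [e1y|d1]; last by exists e2; rewrite inE !e2D /=; move: d1; clear nb; case: x1; case: y1.
  case: (eqVneq x2 y2) => [e2y|d2]; last by exists e3; rewrite inE !e3D /=; move: d2; clear nb; case: x2; case: y2.
  case: (eqVneq x3 y3) => [e3y|d3]; last by exists e4; rewrite inE !e4D /=; move: d3; clear nb; case: x3; case: y3.
  by rewrite e1y e2y e3y eqxx in nb.
- exact: orth_sdS.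
Qed.

Local Open Scope ring_scope.

Lemma bond (R : realType) (X Y : {set V}) : cut_adjacent adj R X Y ->
  forall T A1 A2, cut adj T \subset cut adj (symdiff X Y) -> A1 \in cut adj T ->
  A2 \in cut adj (symdiff X Y) -> A2 \notin cut adj T -> False.
Proof.
move=> [_ [c [d [Hval Hface]]]] T A1 A2 sub H1 H2 H3.
have inC Z : in_CUT adj (cutvec adj R Z).
  exists (fun S => if S == Z then 1 else 0); split; [|split].
  - by move=> S; case: (S == Z).
  - by rewrite -big_mkcond big_pred1_eq.
  - move=> A _ /=; rewrite (bigD1 Z) //= eqxx mul1r big1 ?addr0 // => S /negbTE ->.
    by rewrite mul0r.
pose t := (2 : R)^-1.
pose m := fun A => (1 - t) * cutvec adj R X A + t * cutvec adj R Y A.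
have segm : in_segment adj X Y m.
  exists t; split => //; rewrite /t; apply/andP; split.
    by rewrite invr_ge0.
  by rewrite invf_le1 // ler1n.
have [inm dm] := (Hface m).2 segm.
pose X' := symdiff X T; pose Y' := symdiff Y T.
have key A : A \in E -> cutvec adj R X A + cutvec adj R Y A =
   cutvec adj R X' A + cutvec adj R Y' A.
  move=> HA; have := subsetP sub A; rewrite /cutvec /X' /Y' !cut_sd //.
  case: (A \in cut adj X); case: (A \in cut adj Y); case: (A \in cut adj T) => //= h;
    rewrite ?addr0 ?add0r //; by move/(_ isT): h.
have dsum : dotE adj c m = (dotE adj c (cutvec adj R X') + dotE adj c (cutvec adj R Y')) / 2.
  rewrite /dotE -big_split /= mulr_suml; apply: eq_bigr => A HA.
  rewrite -mulrDr -key // /m /t; field.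
  by [].
have h1 := Hval _ (inC X'); have h2 := Hval _ (inC Y').
rewrite dsum in dm.
move: h1 h2 dm; set a := dotE adj c _; set b := dotE adj c _ => h1 h2 dm.
have eX : a = d by lra.
have [t0 [t01 Ht]] := (Hface (cutvec adj R X')).1 (conj (inC X') eX).
have E1 := cutE H1; have E2 := cutE H2.
have := Ht _ E1; have := Ht _ E2; move: H1 H2 H3.
rewrite /cutvec /X' !cut_sd //.
case: (A1 \in cut adj X); case: (A1 \in cut adj Y); case: (A1 \in cut adj T);
case: (A2 \in cut adj X); case: (A2 \in cut adj Y); case: (A2 \in cut adj T) => //= *; lra.
Qed.

End G.

Theorem lemma2 (V : finType) (adj : rel V) (R : realType) (X Y : {set V}) :
  simple_graph adj -> almost_tree adj 2 ->
  cut_adjacent adj R X Y ->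
  (#|cut adj (symdiff X Y)| <= 3)%N.
Proof.
move=> [adjS adjI] hat ca.
have bd : bondP adj (symdiff X Y).
  split; last exact: (bond adjS adjI ca).
  case: ca => nXY _; apply: contra nXY => /eqP h0; apply/eqP/setP => A.
  case AE: (A \in edges adj).
    have := cut_sd adjS adjI X Y AE; rewrite h0 inE.
    by case: (A \in cut adj X); case: (A \in cut adj Y).
  by rewrite (negbTE (cut_nE _ (negbT AE))) (negbTE (cut_nE _ (negbT AE))).
exact: (main_graph adjS adjI hat.1 hat bd).
Qed.
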